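(* For any real continuous function $f\in C(\Omega)$, if $\|[\mathcal D,\pi(M_f)]\|\le1$ then $|Kf-f|\le 1$ and $|Lf-f|\le 1$, where $|\cdot|$ is the $L^2(\mu)$ norm.
   Context: $\Omega=\{0,1\}^{\mathbb N}$ with the shift $\sigma$; for $a\in\{0,1\}$, $ax=(a,x_1,\dots)$. $\mu$ is the measure of maximal entropy (uniform Bernoulli product measure), $L^2(\mu)$ the Hilbert space of square-integrable functions. Ruelle operator $L\phi(x)=\frac12(\phi(0x)+\phi(1x))$; Koopman operator $K\phi=\phi\circ\sigma$. $M_f$ is multiplication $g\mapsto fg$. On $\mathcal H=L^2(\mu)\times L^2(\mu)$ (norm $|(\phi_1,\phi_2)|^2=|\phi_1|^2+|\phi_2|^2$), $\mathcal D=\begin{pmatrix}0&K\\ L&0\end{pmatrix}$, $\pi(A)=\begin{pmatrix}A&0\\0&A\end{pmatrix}$, $[\mathcal D,\pi(A)]=\mathcal D\pi(A)-\pi(A)\mathcal D$; $\|\cdot\|$ is the operator norm. *)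

(* Defs.v *)
From HB Require Import structures.
From mathcomp Require Import all_boot all_order all_algebra.
From mathcomp Require Import all_classical all_reals all_analysis.
Set Implicit Arguments. Unset Strict Implicit. Unset Printing Implicit Defensive.
Import Order.TTheory GRing.Theory Num.Theory.
Import numFieldTopology.Exports numFieldNormedType.Exports.
Local Open Scope classical_set_scope.
Local Open Scope ring_scope.

(* Omega = {0,1}^N, points are x : nat -> bool, x i = x_{i+1}. *)
Definition cylinder (n : nat) (w : nat -> bool) : set cantor_space :=
  [set x | forall i, (i < n)%N -> x i = w i].

Definition cylinders : set (set cantor_space) :=
  [set A | exists n w, A = cylinder n w].

(* Omega as a measurable space: the sigma-algebra generated by cylinders
   (= the product / Borel sigma-algebra of the Cantor space). *)
Definition Omega := g_sigma_algebraType cylinders.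

(* mu is the uniform Bernoulli product measure (measure of maximal entropy):
   it is characterized by its values on cylinders. *)
Definition is_mme (R : realType) (mu : {measure set Omega -> \bar R}) : Prop :=
  forall n w, mu (cylinder n w) = ((2 ^- n)%:E)%E.

Definition shift (x : cantor_space) : cantor_space := fun i => x i.+1.
Definition pre (a : bool) (x : cantor_space) : cantor_space :=
  fun i => if i is j.+1 then x j else a.

Section Ops.
Variable R : realType.
Local Notation fn := (cantor_space -> R).

Definition Koop (phi : fn) : fn := fun x => phi (shift x).
Definition Ruelle (phi : fn) : fn :=
  fun x => 2^-1 * (phi (pre false x) + phi (pre true x)).
Definition Mul (f : fn) (g : fn) : fn := fun x => f x * g x.

(* operators on H = L^2 x L^2, acting on pairs of functions *)
Definition Dop (p : fn * fn) : fn * fn := (Koop p.2, Ruelle p.1).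
Definition piop (A : fn -> fn) (p : fn * fn) : fn * fn := (A p.1, A p.2).
Definition commut (A : fn -> fn) (p : fn * fn) : fn * fn :=
  let u := Dop (piop A p) in let v := piop A (Dop p) in
  (fun x => u.1 x - v.1 x, fun x => u.2 x - v.2 x).

Definition L2sq (mu : {measure set Omega -> \bar R}) (g : fn) : \bar R :=
  (\int[mu]_(x in [set: Omega]) ((g x) ^+ 2)%:E)%E.

Definition inL2 (mu : {measure set Omega -> \bar R}) (g : fn) : Prop :=
  measurable_fun [set: Omega] (g : Omega -> R) /\ (L2sq mu g < +oo)%E.

Definition Hsq (mu : {measure set Omega -> \bar R}) (p : fn * fn) : \bar R :=
  (L2sq mu p.1 + L2sq mu p.2)%E.

Definition opnorm_le (mu : {measure set Omega -> \bar R})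
  (T : fn * fn -> fn * fn) (c : R) : Prop :=
  forall p, inL2 mu p.1 -> inL2 mu p.2 ->
    (Hsq mu (T p) <= (c ^+ 2)%:E * Hsq mu p)%E.
End Ops.

(* Main.v *)
Require Import Defs.
From HB Require Import structures.
From mathcomp Require Import all_boot all_order all_algebra.
From mathcomp Require Import all_classical all_reals all_analysis.
From mathcomp Require Import ring.
Import Order.TTheory GRing.Theory Num.Theory.
Import numFieldTopology.Exports.
Local Open Scope classical_set_scope.
Local Open Scope ring_scope.

Lemma L2sq0 (R : realType) (mu : {measure set Omega -> \bar R}) :
  L2sq mu (fun _ => 0 : R) = 0%E.
Proof.
rewrite /L2sq.
under eq_integral do rewrite expr0n /=.
by rewrite integral0.
Qed.

Lemma L2sq1 (R : realType) (mu : {measure set Omega -> \bar R}) (Hmu : is_mme mu) :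
  L2sq mu (fun _ => 1 : R) = 1%E.
Proof.
rewrite /L2sq.
under eq_integral do rewrite expr1n /=.
rewrite integral_cst //= mul1e.
have -> : [set: Omega] = cylinder 0 (fun _ => false).
  by apply/seteqP; split => x // _ i.
by rewrite Hmu expr0 invr1.
Qed.

Lemma inL2c (R : realType) (mu : {measure set Omega -> \bar R}) (Hmu : is_mme mu) (c : R) :
  c = 0 \/ c = 1 -> inL2 mu (fun _ => c).
Proof.
move=> hc; split; first exact: measurable_cst.
by case: hc => ->; [rewrite L2sq0 | rewrite (@L2sq1 _ _ Hmu)]; rewrite ltry.
Qed.

Theorem lemma2p19 (R : realType) (mu : {measure set Omega -> \bar R})
  (Hmu : is_mme mu) (f : cantor_space -> R) (Hf : continuous f) :
  opnorm_le mu (commut (Mul f)) 1 ->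
  (L2sq mu (fun x => (Koop f x - f x)%R) <= 1%:E)%E /\
  (L2sq mu (fun x => (Ruelle f x - f x)%R) <= 1%:E)%E.
Proof.
move=> H; split.
- have := H ((fun _ => 0), (fun _ => 1)) (@inL2c _ _ Hmu _ (or_introl erefl))
    (@inL2c _ _ Hmu _ (or_intror erefl)).
  rewrite /Hsq /= L2sq0 (@L2sq1 _ _ Hmu) expr1n mul1e add0e.
  have -> : (fun x => Koop (Mul f (fun=> 1)) x - Mul f (Koop (fun=> 1)) x) = (fun x => Koop f x - f x).
    by apply/funext => x; rewrite /commut /Dop /piop /Mul /Koop /=; ring.
  have -> : (fun x => Ruelle (Mul f (fun=> 0)) x - Mul f (Ruelle (fun=> 0)) x) = (fun _ => 0).
    by apply/funext => x; rewrite /commut /Dop /piop /Mul /Ruelle /= ; ring.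
  by rewrite L2sq0 adde0.
- have := H ((fun _ => 1), (fun _ => 0)) (@inL2c _ _ Hmu _ (or_intror erefl))
    (@inL2c _ _ Hmu _ (or_introl erefl)).
  rewrite /Hsq /= L2sq0 (@L2sq1 _ _ Hmu) expr1n mul1e adde0.
  have -> : (fun x => Ruelle (Mul f (fun=> 1)) x - Mul f (Ruelle (fun=> 1)) x) = (fun x => Ruelle f x - f x).
    apply/funext => x; rewrite /commut /Dop /piop /Mul /Ruelle /= !mulr1.
    have h2 : (2^-1 * (1 + 1) : R) = 1 by rewrite mulVf // pnatr_eq0.
    by rewrite h2 mulr1.
  have -> : (fun x => Koop (Mul f (fun=> 0)) x - Mul f (Koop (fun=> 0)) x) = (fun _ => 0).
    by apply/funext => x; rewrite /commut /Dop /piop /Mul /Koop /=; ring.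
  by rewrite L2sq0 add0e.
Qed.
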